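(* For each $n\ge0$, the $n$-dimensional simplex $\Delta^n=\{w\colon\{0,\dots,n\}\to[0,1]\mid \sum_i w(i)=1\}$ with midpoint operation $m(w,w')=\tfrac{w+w'}{2}$ (pointwise) and insertion of generators $i\mapsto\delta_i$ (the vertices) is the free m-convex body in the category of sets over the set $\{0,\dots,n\}$: for every m-convex body $(A,m_A)$ in sets and every function $f\colon\{0,\dots,n\}\to A$ there is a unique midpoint homomorphism $h\colon\Delta^n\to A$ with $h(\delta_i)=f(i)$ for all $i$.
   Context: A midpoint set is a set $A$ with $m_A\colon A\times A\to A$ satisfying $m_A(x,x)=x$, $m_A(x,y)=m_A(y,x)$, $m_A(m_A(x,y),m_A(z,w))=m_A(m_A(x,z),m_A(y,w))$. It is cancellative if $m_A(x,y)=m_A(x,z)$ implies $y=z$, and iterative if for every set $X$ and functions $h\colon X\to A$, $t\colon X\to X$ there is a unique $u\colon X\to A$ with $u(x)=m_A(h(x),u(t(x)))$. An m-convex body is a cancellative iterative midpoint set; homomorphisms preserve the midpoint operation. $\delta_i$ is the function with value $1$ at $i$ and $0$ elsewhere. *)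

(* Defs.v *)
From Stdlib Require Import Rdefinitions.
From HB Require Import structures.
From mathcomp Require Import all_boot all_order all_algebra.
From mathcomp Require Import Rstruct.

Set Implicit Arguments. Unset Strict Implicit. Unset Printing Implicit Defensive.
Import Order.TTheory GRing.Theory Num.Theory.
Local Open Scope ring_scope.

Definition is_midpoint_set (A : Type) (m : A -> A -> A) : Prop :=
  (forall x, m x x = x) /\
  (forall x y, m x y = m y x) /\
  (forall x y z w, m (m x y) (m z w) = m (m x z) (m y w)).

Definition cancellative (A : Type) (m : A -> A -> A) : Prop :=
  forall x y z, m x y = m x z -> y = z.

Definition iterative (A : Type) (m : A -> A -> A) : Prop :=
  forall (X : Type) (h : X -> A) (t : X -> X),
    exists! u : X -> A, forall x, u x = m (h x) (u (t x)).

Definition m_convex_body (A : Type) (m : A -> A -> A) : Prop :=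
  is_midpoint_set m /\ cancellative m /\ iterative m.

Definition midpoint_hom (A B : Type) (mA : A -> A -> A) (mB : B -> B -> B)
  (h : A -> B) : Prop :=
  forall x y, h (mA x y) = mB (h x) (h y).

Definition in_simplex (n : nat) (w : 'I_n.+1 -> R) : Prop :=
  (forall i, 0 <= w i <= 1) /\ \sum_(i < n.+1) w i = 1.

Definition simplex (n : nat) := {w : 'I_n.+1 -> R | in_simplex w}.

Lemma mid_in_simplex (n : nat) (w w' : 'I_n.+1 -> R) :
  in_simplex w -> in_simplex w' -> in_simplex (fun i => (w i + w' i) / 2).
Proof.
move=> [Hw Sw] [Hw' Sw']; split.
- move=> i; have /andP[a b] := Hw i; have /andP[c d] := Hw' i.
  apply/andP; split.
  + by apply: divr_ge0 => //; apply: addr_ge0.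
  + rewrite ler_pdivrMr ?ltr0n // mul1r.
    by rewrite -[2%:R]/(1 + 1); apply: lerD.
- rewrite -mulr_suml big_split /= Sw Sw'.
  by rewrite -mulr2n divff // pnatr_eq0.
Qed.

Definition simplex_mid (n : nat) (x y : simplex n) : simplex n :=
  exist _ (fun i => (proj1_sig x i + proj1_sig y i) / 2)
    (mid_in_simplex (proj2_sig x) (proj2_sig y)).

Definition delta (n : nat) (i : 'I_n.+1) : 'I_n.+1 -> R :=
  fun j => if j == i then 1 else 0.

Lemma delta_in_simplex (n : nat) (i : 'I_n.+1) : in_simplex (delta i).
Proof.
split.
- by move=> j; rewrite /delta; case: (j == i); rewrite ?lexx ?ler01.
- rewrite (bigD1 i) //= /delta eqxx big1 ?addr0 //.
  by move=> j /negbTE ->.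
Qed.

Definition vertex (n : nat) (i : 'I_n.+1) : simplex n :=
  exist _ (delta i) (delta_in_simplex i).

(* Main.v *)
Require Import Defs.
From Stdlib Require Import Rdefinitions.
From Stdlib Require Raxioms.
From Stdlib Require Import ProofIrrelevance FunctionalExtensionality Classical IndefiniteDescription Lia.
From HB Require Import structures.
From mathcomp Require Import all_boot all_order all_algebra.
From mathcomp Require Import Rstruct zify ring lra.
Set Implicit Arguments. Unset Strict Implicit. Unset Printing Implicit Defensive.
Import Order.TTheory GRing.Theory Num.Theory.
Local Open Scope ring_scope.
Section Part1.
Variable n : nat.

Lemma simplex_eq (x y : simplex n) : (forall i, sval x i = sval y i) -> x = y.
Proof.
case: x y => [x hx] [y hy] /= H.
have E : x = y by apply: functional_extensionality.
subst; f_equal; apply: proof_irrelevance.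
Qed.

Lemma sm_val (x y : simplex n) i : sval (simplex_mid x y) i = (sval x i + sval y i) / 2.
Proof. by []. Qed.

Lemma simplex_ge0 (x : simplex n) i : 0 <= sval x i.
Proof. by case: x => w [H h2] /=; case/andP: (H i). Qed.
Lemma simplex_le1 (x : simplex n) i : sval x i <= 1.
Proof. by case: x => w [H h2] /=; case/andP: (H i). Qed.
Lemma simplex_sum (x : simplex n) : \sum_i sval x i = 1.
Proof. by case: x => w [h1 h2]. Qed.

Lemma simplex_midpoint : is_midpoint_set (@simplex_mid n).
Proof.
rewrite /is_midpoint_set; split; [|split].
- move=> x; apply: simplex_eq => i; rewrite /=; lra.
- move=> x y; apply: simplex_eq => i; rewrite /=; lra.
- move=> x y z w; apply: simplex_eq => i; rewrite /=; lra.
Qed.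

Lemma simplex_cancel : cancellative (@simplex_mid n).
Proof.
move=> x y z H; apply: simplex_eq => i.
have := congr1 (fun u : simplex n => sval u i) H; rewrite /=; lra.
Qed.

Definition ep (K : nat) := ((2%:R : R) ^+ K)^-1.
Lemma ep_gt0 K : 0 < ep K.
Proof. by rewrite /ep invr_gt0 exprn_gt0. Qed.
Lemma epS K : ep K = 2 * ep K.+1.
Proof.
rewrite /ep exprS invfM mulrA divff ?mul1r //; apply/eqP; lra.
Qed.
Lemma ep0 : ep 0 = 1.
Proof. by rewrite /ep expr0 invr1. Qed.

Lemma ep_small (eps : R) : 0 < eps -> exists K, ep K < eps.
Proof.
move=> he.
pose K := Num.truncn (eps^-1).
exists K.+1.
have h1 : eps^-1 < K.+1%:R by apply: truncnS_gt.
have h2 : (K.+1 < 2 ^ K.+1)%N by apply: ltn_expl.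
have h3 : (K.+1%:R : R) < 2 ^+ K.+1.
  by rewrite -natrX ltr_nat.
rewrite /ep.
have hp : (0 : R) < 2 ^+ K.+1 by rewrite exprn_gt0.
rewrite -[eps]invrK ltf_pV2 ?posrE ?invr_gt0 //.
by apply: lt_trans h1 h3.
Qed.

Lemma bracket_eq (a b c : R) : 0 <= c -> (forall K, `|a - b| <= c * ep K) -> a = b.
Proof.
move=> hc H; apply/eqP; rewrite -subr_eq0 -normr_eq0; apply/eqP.
apply/le_anti/andP; split; last by [].
rewrite leNgt; apply/negP => hpos.
have hc1 : 0 < c + 1 by lra.
pose d := `|a - b| / (c + 1).
have [K hK] := @ep_small d (divr_gt0 hpos hc1).
have h1 := H K; rewrite ltr_pdivlMr // in hK.
have h2 := ep_gt0 K.
have : ep K * (c + 1) = c * ep K + ep K by ring.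
lra.
Qed.

Section Iter.
Variables (X : Type) (hh : X -> simplex n) (t : X -> X).

Fixpoint Sp (K : nat) (x : X) (i : 'I_n.+1) :=
  if K is K'.+1 then (sval (hh x) i + Sp K' (t x) i) / 2 else 0.

Lemma Sp_inc K x i : 0 <= Sp K.+1 x i - Sp K x i <= ep K.+1.
Proof.
elim: K x => [|K IH] x /=.
  rewrite /ep expr1; have := simplex_ge0 (hh x) i; have := simplex_le1 (hh x) i.
  have -> : ((2%:R : R)^-1) = 1/2 by rewrite div1r.
  move=> h1 h2; apply/andP; split; lra.
have := IH (t x); rewrite (epS K.+1) /=.
move=> /andP [h1 h2]; apply/andP; split; lra.
Qed.

Lemma Sp_ge0 K x i : 0 <= Sp K x i.
Proof.
elim: K x => [|K IH] x /=; first by [].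
have := simplex_ge0 (hh x) i; have := IH (t x); lra.
Qed.

Lemma Sp_le K j x i : Sp (K + j) x i <= Sp K x i + ep K - ep (K + j).
Proof.
elim: j => [|j IH]; first by rewrite addn0; lra.
have := Sp_inc (K + j) x i; rewrite addnS.
move: IH; rewrite (epS (K + j)) => IH /andP [h1 h2]; lra.
Qed.

Lemma Sp_mono K j x i : Sp K x i <= Sp (K + j) x i.
Proof.
elim: j => [|j IH]; first by rewrite addn0.
have := Sp_inc (K + j) x i; rewrite addnS.
move=> /andP [h1 h2]; lra.
Qed.

Lemma Sp_sum K x : \sum_i Sp K x i = 1 - ep K.
Proof.
elim: K x => [|K IH] x /=.
  by rewrite big1 // ep0 subrr.
rewrite -mulr_suml big_split /= IH simplex_sum (epS K); lra.
Qed.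


Lemma Sp_le1 K x i : Sp K x i <= 1.
Proof.
have := Sp_le 0 K x i; rewrite add0n /= ep0 => h.
have := ep_gt0 K; lra.
Qed.

Lemma Sp_ub K j x i : Sp j x i <= Sp K x i + ep K.
Proof.
have hK := ep_gt0 K.
case: (leqP j K) => hj.
  have := Sp_mono j (K - j) x i; rewrite subnKC //; lra.
have := Sp_le K (j - K) x i; rewrite subnKC ?(ltnW hj) //.
have := ep_gt0 j; lra.
Qed.

Lemma Sp_bound x i : Raxioms.bound (fun r => exists K, r = Sp K x i).
Proof. by exists 1 => r [K ->]; apply/RleP; apply: Sp_le1. Qed.

Lemma Sp_ex x i : exists r, (fun r => exists K, r = Sp K x i) r.
Proof. by exists (Sp 0 x i), 0%N. Qed.

Definition Ulim x i := proj1_sig (Raxioms.completeness _ (Sp_bound x i) (Sp_ex x i)).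

Lemma Ulim_br K x i : Sp K x i <= Ulim x i <= Sp K x i + ep K.
Proof.
rewrite /Ulim; case: Raxioms.completeness => r [hub hl] /=.
apply/andP; split.
  by apply/RleP; apply: hub; exists K.
apply/RleP; apply: hl => y [j ->]; apply/RleP; apply: Sp_ub.
Qed.

Lemma two_brackets (S : nat -> R) a b :
  (forall K, S K <= a <= S K + ep K) -> (forall K, S K <= b <= S K + ep K) -> a = b.
Proof.
move=> ha hb; apply: (@bracket_eq _ _ 1) => // K.
rewrite mul1r; have /andP[h1 h2] := ha K; have /andP[h3 h4] := hb K.
rewrite ler_norml; apply/andP; split; lra.
Qed.

End Iter.

Lemma simplex_iterative : iterative (@simplex_mid n).
Proof.
move=> X hh t.
have hin : forall x, in_simplex (fun i => Ulim hh t x i).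
  move=> x; split.
    move=> i; have := Ulim_br hh t 0 x i; rewrite /= ep0 => /andP [h1 h2].
    apply/andP; split; lra.
  pose c := (n%:R : R) + 1.
  apply: (@bracket_eq _ _ c); first by apply: addr_ge0; rewrite ?ler0n ?ler01.
  move=> K.
  have hlo : 1 - ep K <= \sum_i Ulim hh t x i.
    rewrite -(Sp_sum hh t K x); apply: ler_sum => i _.
    by case/andP: (Ulim_br hh t K x i).
  have hhi : \sum_i Ulim hh t x i <= 1 - ep K + (n.+1)%:R * ep K.
    have <- : \sum_i (Sp hh t K x i + ep K) = 1 - ep K + (n.+1)%:R * ep K.
      by rewrite big_split /= Sp_sum sumr_const card_ord mulr_natl.
    apply: ler_sum => i _ .
    by case/andP: (Ulim_br hh t K x i).
  have := ep_gt0 K; rewrite -natr1 in hhi |- *.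
  move=> he; have hn := ler0n R n; rewrite ler_norml; apply/andP; split; rewrite /c; nra.
pose u x : simplex n := exist _ _ (hin x).
exists u; split.
  move=> x; apply: simplex_eq => i /=.
  apply: (@two_brackets (fun K => Sp hh t K x i)) => K.
    exact: Ulim_br.
  case: K => [|K] /=.
    rewrite ep0 add0r; have := simplex_ge0 (hh x) i; have := simplex_le1 (hh x) i.
    have := Ulim_br hh t 0 (t x) i; rewrite /= ep0 => /andP [h1 h2] h3 h4.
    apply/andP; split; lra.
  have := Ulim_br hh t K (t x) i; rewrite (epS K) => /andP [h1 h2].
  apply/andP; split; lra.
move=> u' hu'; apply: functional_extensionality => x; apply: simplex_eq => i /=.
apply: (@two_brackets (fun K => Sp hh t K x i)) => K; first exact: Ulim_br.
elim: K x => [|K IH] x /=.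
  rewrite ep0 add0r; apply/andP; split; [exact: simplex_ge0 | exact: simplex_le1].
rewrite (hu' x) /=; have := IH (t x); rewrite (epS K) => /andP [h1 h2].
apply/andP; split; lra.
Qed.

Lemma simplex_mcb : m_convex_body (@simplex_mid n).
Proof.
split; first exact: simplex_midpoint.
split; [exact: simplex_cancel | exact: simplex_iterative].
Qed.

End Part1.
Section Trees.
Variables (n : nat) (A : Type) (mA : A -> A -> A) (f : 'I_n.+1 -> A).
Hypothesis Hmid : is_midpoint_set mA.
Let mxx : forall x, mA x x = x. Proof. by case: Hmid. Qed.
Let mC : forall x y, mA x y = mA y x. Proof. by case: Hmid => _ []. Qed.
Let mM : forall x y z w, mA (mA x y) (mA z w) = mA (mA x z) (mA y w).
Proof. by case: Hmid => _ []. Qed.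

Definition sz (l : nat -> nat) := (\sum_(i < n.+1) l i)%N.
Definition addv (a b : nat -> nat) := fun i => (a i + b i)%N.
Definition ei (x : 'I_n.+1) := fun i : nat => nat_of_bool (i == x).
Definition fill (l : nat -> nat) (K : nat) := fun i => minn (l i) (K - \sum_(j < i) l j)%N.

Lemma fill_sum l K m : (\sum_(i < m) fill l K i)%N = minn K (\sum_(i < m) l i)%N.
Proof.
elim: m => [|m IH]; first by rewrite !big_ord0; lia.
rewrite !big_ord_recr /= IH /fill.
set S := (\sum_(i < m) l i)%N.
lia.
Qed.

Lemma sz_fill l K : sz (fill l K) = minn K (sz l).
Proof. exact: fill_sum. Qed.

Lemma fill_le l K i : (fill l K i <= l i)%N.
Proof. rewrite /fill; lia. Qed.

Lemma sz_add a b : sz (addv a b) = (sz a + sz b)%N.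
Proof. by rewrite /sz /addv big_split. Qed.

Lemma sz_ei x : sz (ei x) = 1%N.
Proof.
rewrite /sz (bigD1 x) //= /ei eqxx big1 // => i /negbTE hi.
by have -> : (nat_of_ord i == nat_of_ord x) = false by [].
Qed.

Lemma sz_ext a b : (forall i, (i < n.+1)%N -> a i = b i) -> sz a = sz b.
Proof. by move=> H; apply: eq_bigr => i _; apply: H. Qed.

Lemma sz_le a b : (forall i, (i < n.+1)%N -> (a i <= b i)%N) -> (sz a <= sz b)%N.
Proof. by move=> H; apply: leq_sum => i _; apply: H. Qed.

Lemma sz_lt a b (x : 'I_n.+1) : (forall i, (i < n.+1)%N -> (a i <= b i)%N) ->
  (a x < b x)%N -> (sz a < sz b)%N.
Proof.
move=> H hx; rewrite /sz (bigD1 x) //= [X in (_ < X)%N](bigD1 x) //=.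
rewrite -addSn leq_add //; apply: leq_sum => i _; exact: H.
Qed.

Lemma sz_eq_pt a b : (forall i, (i < n.+1)%N -> (a i <= b i)%N) -> sz a = sz b ->
  forall i, (i < n.+1)%N -> a i = b i.
Proof.
move=> H hs i hi; apply/eqP; rewrite eqn_leq H //=.
rewrite leqNgt; apply/negP => hlt.
have := sz_lt (x := Ordinal hi) H hlt; rewrite hs ltnn.
by [].
Qed.

Lemma le_sz c i : (i < n.+1)%N -> (c i <= sz c)%N.
Proof. by move=> hi; rewrite /sz (bigD1 (Ordinal hi)) //= leq_addr. Qed.

Definition ev0 (l : nat -> nat) := f (odflt ord0 [pick i : 'I_n.+1 | (0 < l i)%N]).

Fixpoint ev (N : nat) (l : nat -> nat) : A :=
  if N is N'.+1 then
    mA (ev N' (fill l (2 ^ N'))) (ev N' (fun i => l i - fill l (2 ^ N') i)%N)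
  else ev0 l.

Lemma ev_ext N a b : (forall i, (i < n.+1)%N -> a i = b i) -> ev N a = ev N b.
Proof.
elim: N a b => [|N IH] a b H /=.
  rewrite /ev0; congr (f (odflt _ _)); apply: eq_pick => i /=.
  by rewrite H.
have hf : forall i, (i < n.+1)%N -> fill a (2 ^ N) i = fill b (2 ^ N) i.
  move=> i hi; rewrite /fill H //; congr (minn _ (_ - _)).
  by apply: eq_bigr => j _; apply: H; apply: ltn_trans hi.
congr (mA _ _); apply: IH => i hi; rewrite ?hf ?H //.
Qed.

Lemma ev0_ei (c : nat -> nat) (x : 'I_n.+1) : sz c = 0%N -> ev 0 (addv c (ei x)) = f x.
Proof.
move=> hc /=; rewrite /ev0.
have hc0 : forall i, (i < n.+1)%N -> c i = 0%N.
  move=> i hi; have := le_sz c hi; rewrite hc; lia.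
case: pickP => [i /= hi | /(_ x) /=]; last by rewrite /addv /ei eqxx; lia.
congr f; apply/val_inj => /=.
move: hi; rewrite /addv /ei hc0 //.
by case: eqP.
Qed.


Definition Eprop N := forall (c d : nat -> nat) (x y : 'I_n.+1),
  (sz c).+1 = (2 ^ N)%N -> (sz d).+1 = (2 ^ N)%N ->
  mA (ev N (addv c (ei x))) (ev N (addv d (ei y))) =
  mA (ev N (addv c (ei y))) (ev N (addv d (ei x))).
Definition Pprop N := forall a b, sz a = (2 ^ N)%N -> sz b = (2 ^ N)%N ->
  ev N.+1 (addv a b) = mA (ev N a) (ev N b).
Definition Qprop N := forall a b a' b', sz a = (2 ^ N)%N -> sz b = (2 ^ N)%N ->
  sz a' = (2 ^ N)%N -> sz b' = (2 ^ N)%N ->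
  (forall i, (i < n.+1)%N -> (a i + b i = a' i + b' i)%N) ->
  mA (ev N a) (ev N b) = mA (ev N a') (ev N b').

Lemma sz_sub1 (a : nat -> nat) (x : 'I_n.+1) : (0 < a x)%N -> (sz (fun i => a i - ei x i)%N).+1 = sz a.
Proof.
move=> hx; rewrite -addn1 -(sz_ei x) -sz_add; apply: sz_ext => i hi.
rewrite /addv /ei; case: eqP => [->|]; lia.
Qed.

Lemma ev_sub1 N (a : nat -> nat) (x : 'I_n.+1) : (0 < a x)%N ->
  ev N (addv (fun i => a i - ei x i)%N (ei x)) = ev N a.
Proof.
move=> hx; apply: ev_ext => i hi; rewrite /addv /ei; case: eqP => [->|]; lia.
Qed.

Lemma Q_of_E N : Eprop N -> Qprop N.
Proof.
move=> HE.
suff H : forall k a b a' b', sz a = (2 ^ N)%N -> sz b = (2 ^ N)%N ->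
  sz a' = (2 ^ N)%N -> sz b' = (2 ^ N)%N ->
  (forall i, (i < n.+1)%N -> (a i + b i = a' i + b' i)%N) ->
  (sz (fun i => a i - a' i)%N <= k)%N ->
  mA (ev N a) (ev N b) = mA (ev N a') (ev N b').
  by move=> a b a' b' ha hb ha' hb' hab; apply: (H _ a b a' b') => //.
elim=> [|k IH] a b a' b' ha hb ha' hb' hab hk.
all: case: (boolP [exists i : 'I_n.+1, (a' i < a i)%N]) => [/existsP [x hx] | /existsP hne].
- have := le_sz (fun i => a i - a' i)%N (ltn_ord x); lia.
- have hle : forall i, (i < n.+1)%N -> (a i <= a' i)%N.
    move=> i hi; rewrite leqNgt; apply/negP => h; apply: hne; by exists (Ordinal hi).
  have heq := sz_eq_pt hle (etrans ha (esym ha')).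
  congr (mA _ _); apply: ev_ext => i hi; have := heq i hi; have := hab i hi; lia.
- case: (boolP [exists i : 'I_n.+1, (a i < a' i)%N]) => [/existsP [y hy] | /existsP hne2].
    have hxy : x != y by apply/eqP => exy; move: hx hy; rewrite exy; lia.
    have hxy' : (x : nat) <> y by move=> e; move/eqP: hxy; apply; apply: val_inj.
    have hby : (0 < b y)%N by have := hab y (ltn_ord y); lia.
    have hax : (0 < a x)%N by lia.
    pose c := (fun i => a i - ei x i)%N; pose d := (fun i => b i - ei y i)%N.
    have hc : (sz c).+1 = (2 ^ N)%N by rewrite sz_sub1.
    have hd : (sz d).+1 = (2 ^ N)%N by rewrite sz_sub1.
    rewrite -(ev_sub1 N hax) -(ev_sub1 N hby) HE //.
    apply: IH.
    + by rewrite sz_add sz_ei addn1.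
    + by rewrite sz_add sz_ei addn1.
    + by [].
    + by [].
    + move=> i hi; have := hab i hi; rewrite /addv /c /d /ei.
      case: eqP => [->|?]; case: eqP => [e|?] /=; rewrite ?e; lia.
    + have : (sz (fun i => addv c (ei y) i - a' i)%N).+1 = sz (fun i => a i - a' i)%N.
        rewrite -addn1 -(sz_ei x) -sz_add; apply: sz_ext => i hi.
        rewrite /addv /c /ei; case: eqP => [->|?]; case: eqP => [e|?] /=; rewrite ?e; lia.
      rewrite -/c; move: hk; lia.
  have hle : forall i, (i < n.+1)%N -> (a' i <= a i)%N.
    move=> i hi; rewrite leqNgt; apply/negP => h; apply: hne2; by exists (Ordinal hi).
  have heq := sz_eq_pt hle (etrans ha' (esym ha)).
  have := heq x (ltn_ord x); lia.
- have hle : forall i, (i < n.+1)%N -> (a i <= a' i)%N.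
    move=> i hi; rewrite leqNgt; apply/negP => h; apply: hne; by exists (Ordinal hi).
  have heq := sz_eq_pt hle (etrans ha (esym ha')).
  congr (mA _ _); apply: ev_ext => i hi; have := heq i hi; have := hab i hi; lia.
Qed.

Lemma P_of_Q N : Qprop N -> Pprop N.
Proof.
move=> HQ a b ha hb /=.
set F := fill (addv a b) (2 ^ N).
have hF : sz F = (2 ^ N)%N by rewrite sz_fill sz_add ha hb; lia.
have hG : sz (fun i => addv a b i - F i)%N = (2 ^ N)%N.
  have : (sz (fun i => addv a b i - F i)%N + sz F)%N = sz (addv a b).
    rewrite -sz_add; apply: sz_ext => i hi; have := fill_le (addv a b) (2 ^ N) i.
    rewrite /F /addv; lia.
  rewrite hF sz_add ha hb; lia.
apply: HQ => // i hi; have := fill_le (addv a b) (2 ^ N) i; rewrite /F /addv; lia.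
Qed.

Lemma split_x N (a : nat -> nat) (x : 'I_n.+1) : Pprop N -> sz a = (2 ^ N.+1)%N -> (0 < a x)%N ->
  exists c1 a2, (sz c1).+1 = (2 ^ N)%N /\ sz a2 = (2 ^ N)%N /\
    (forall i, (i < n.+1)%N -> a i = c1 i + ei x i + a2 i)%N /\
    ev N.+1 a = mA (ev N (addv c1 (ei x))) (ev N a2).
Proof.
move=> HP ha hx.
set F := fill a (2 ^ N); set G := (fun i => a i - F i)%N.
have hF : sz F = (2 ^ N)%N by rewrite sz_fill ha expnS; lia.
have hG : sz G = (2 ^ N)%N.
  have : (sz G + sz F)%N = sz a.
    rewrite -sz_add; apply: sz_ext => i hi; have := fill_le a (2 ^ N) i.
    rewrite /addv /G /F; lia.
  rewrite hF ha expnS; lia.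
have hFG : forall i, (F i <= a i)%N by move=> i; apply: fill_le.
case: (posnP (F x)) => hFx.
  have hGx : (0 < G x)%N by rewrite /G hFx; lia.
  exists (fun i => G i - ei x i)%N, F; split; first by rewrite sz_sub1.
  split; first by [].
  split; first by move=> i hi; rewrite /G /ei; have := hFG i; case: eqP => [->|]; lia.
  by rewrite /= -/F -/G mC ev_sub1.
exists (fun i => F i - ei x i)%N, G; split; first by rewrite sz_sub1.
split; first by [].
split; first by move=> i hi; rewrite /G /ei; have := hFG i; case: eqP => [->|]; lia.
by rewrite /= -/F -/G ev_sub1.
Qed.

Lemma E_succ N : Eprop N -> Pprop N -> Eprop N.+1.
Proof.
move=> HE HP c d x y hc hd.
have ha : sz (addv c (ei x)) = (2 ^ N.+1)%N by rewrite sz_add sz_ei addn1.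
have hb : sz (addv d (ei y)) = (2 ^ N.+1)%N by rewrite sz_add sz_ei addn1.
have hax : (0 < addv c (ei x) x)%N by rewrite /addv /ei eqxx; lia.
have hby : (0 < addv d (ei y) y)%N by rewrite /addv /ei eqxx; lia.
have [c1 [a2 [hc1 [ha2 [hpa ->]]]]] := split_x HP ha hax.
have [d1 [b2 [hd1 [hb2 [hpb ->]]]]] := split_x HP hb hby.
rewrite mM HE // -mM.
have e1 : mA (ev N (addv c1 (ei y))) (ev N a2) = ev N.+1 (addv c (ei y)).
  rewrite -HP; last by [].
    apply: ev_ext => i hi; have := hpa i hi; rewrite /addv /ei; case: eqP; lia.
  by rewrite sz_add sz_ei addn1.
have e2 : mA (ev N (addv d1 (ei x))) (ev N b2) = ev N.+1 (addv d (ei x)).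
  rewrite -HP; last by [].
    apply: ev_ext => i hi; have := hpb i hi; rewrite /addv /ei; case: eqP; case: eqP; lia.
  by rewrite sz_add sz_ei addn1.
by rewrite e1 e2.
Qed.

Lemma E0 : Eprop 0.
Proof.
move=> c d x y hc hd.
have hc0 : sz c = 0%N by move: hc; rewrite expn0; lia.
have hd0 : sz d = 0%N by move: hd; rewrite expn0; lia.
by rewrite !ev0_ei.
Qed.

Lemma E_all N : Eprop N.
Proof.
elim: N => [|N IH]; first exact: E0.
by apply: E_succ => //; apply: P_of_Q; apply: Q_of_E.
Qed.

Lemma P_all N : Pprop N.
Proof. by apply: P_of_Q; apply: Q_of_E; apply: E_all. Qed.

End Trees.

Definition myeps (T : Type) (t0 : T) (P : T -> Prop) : T :=
  proj1_sig (constructive_indefinite_description (fun p => (exists q, P q) -> P p)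
    (match classic (exists q, P q) with
     | or_introl (ex_intro q hq) => ex_intro _ q (fun _ => hq)
     | or_intror hn => ex_intro _ t0 (fun h => False_ind _ (hn h))
     end)).

Lemma myeps_spec (T : Type) (t0 : T) (P : T -> Prop) : (exists q, P q) -> P (myeps t0 P).
Proof. by rewrite /myeps; case: constructive_indefinite_description => p hp /=; apply: hp. Qed.

Section Dyadic.
Variables (n : nat) (A : Type) (mA : A -> A -> A) (f : 'I_n.+1 -> A).
Hypothesis Hmid : is_midpoint_set mA.
Let mxx : forall x, mA x x = x. Proof. by case: Hmid. Qed.
Let mC : forall x y, mA x y = mA y x. Proof. by case: Hmid => _ []. Qed.
Let mM : forall x y z w, mA (mA x y) (mA z w) = mA (mA x z) (mA y w).
Proof. by case: Hmid => _ []. Qed.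

Local Notation szn := (sz n).
Local Notation ev := (ev mA f).

Definition pt (N : nat) (l : nat -> nat) := fun i : 'I_n.+1 => ((l i)%:R : R) / (2 ^ N)%:R.

Lemma two_pow_gt0 N : (0 : R) < (2 ^ N)%:R.
Proof. by rewrite ltr0n expn_gt0. Qed.

Lemma pt_lift N k l : pt N l = pt (N + k) (fun i => 2 ^ k * l i)%N.
Proof.
apply: functional_extensionality => i; rewrite /pt expnD natrM natrM.
have h1 := two_pow_gt0 N; have h2 := two_pow_gt0 k.
field; apply/andP; split; rewrite gt_eqF //.
Qed.

Lemma sz_scale k l : szn (fun i => 2 ^ k * l i)%N = (2 ^ k * szn l)%N.
Proof. by rewrite /sz big_distrr. Qed.

Lemma ev_double N k l : szn l = (2 ^ N)%N -> ev (N + k) (fun i => 2 ^ k * l i)%N = ev N l.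
Proof.
move=> hl; elim: k => [|k IH].
  by rewrite addn0; apply: ev_ext => i _; rewrite expn0 mul1n.
rewrite addnS.
have hs : szn (fun i => 2 ^ k * l i)%N = (2 ^ (N + k))%N by rewrite sz_scale hl -expnD addnC.
rewrite -IH -[RHS]mxx -(@P_all _ _ _ f Hmid _ _ _ hs hs).
by apply: ev_ext => i _; rewrite /addv expnS; lia.
Qed.

Lemma pt_inj N l l' : pt N l = pt N l' -> forall i, (i < n.+1)%N -> l i = l' i.
Proof.
move=> H i hi; have := congr1 (fun v => v (Ordinal hi)) H; rewrite /pt /=.
have h := two_pow_gt0 N.
move=> e; have : ((l i)%:R : R) = (l' i)%:R.
  by have := congr1 (fun z => z * (2 ^ N)%:R) e; rewrite !mulfVK ?gt_eqF.
by move/eqP; rewrite eqr_nat => /eqP.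
Qed.

Lemma ev_level N l N' l' : szn l = (2 ^ N)%N -> szn l' = (2 ^ N')%N -> pt N l = pt N' l' ->
  ev N l = ev N' l'.
Proof.
wlog le : N l N' l' / (N <= N')%N.
  move=> W hl hl' e; case: (leqP N N') => h; first exact: W.
  by symmetry; apply: W => //; apply: ltnW.
move=> hl hl' e.
rewrite -(subnKC le) in e hl' |- *.
rewrite (pt_lift N (N' - N) l) in e.
rewrite -(ev_double (N' - N) hl); apply: ev_ext => i hi.
by apply: pt_inj e i hi.
Qed.

Definition isDy (v : 'I_n.+1 -> R) := exists N l, szn l = (2 ^ N)%N /\ v = pt N l.

Definition evR (v : 'I_n.+1 -> R) : A :=
  let p := myeps (0%N, fun _ : nat => 0%N)
    (fun p : nat * (nat -> nat) => szn p.2 = (2 ^ p.1)%N /\ v = pt p.1 p.2) in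
  ev p.1 p.2.

Lemma evR_pt N l : szn l = (2 ^ N)%N -> evR (pt N l) = ev N l.
Proof.
move=> hl; rewrite /evR.
set P := (fun p : nat * (nat -> nat) => _).
have hex : exists p, P p by exists (N, l).
have [h1 h2] := myeps_spec (0%N, fun _ : nat => 0%N) hex.
by symmetry; apply: ev_level.
Qed.

Lemma pt_mid N a b : (fun i => (pt N a i + pt N b i) / 2) = pt N.+1 (addv a b).
Proof.
apply: functional_extensionality => i; rewrite /pt /addv natrD expnS natrM.
have h := two_pow_gt0 N.
field; rewrite gt_eqF //.
Qed.

Lemma isDy_mid v v' : isDy v -> isDy v' ->
  isDy (fun i => (v i + v' i) / 2) /\ evR (fun i => (v i + v' i) / 2) = mA (evR v) (evR v').
Proof.
move=> [N [l [hl ->]]] [N' [l' [hl' ->]]].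
rewrite (pt_lift N N' l) (pt_lift N' N l') addnC.
have ha : szn (fun i => 2 ^ N' * l i)%N = (2 ^ (N' + N))%N by rewrite sz_scale hl -expnD.
have hb : szn (fun i => 2 ^ N * l' i)%N = (2 ^ (N' + N))%N by rewrite sz_scale hl' -expnD addnC.
rewrite pt_mid; split.
  by exists (N' + N).+1, (addv (fun i => 2 ^ N' * l i) (fun i => 2 ^ N * l' i))%N; split => //;
     rewrite sz_add ha hb expnS; lia.
rewrite !evR_pt //; first exact: (@P_all _ _ _ f Hmid).
by rewrite sz_add ha hb expnS; lia.
Qed.

End Dyadic.

Section Digit.
Variable n : nat.
Local Notation szn := (sz n).
Local Notation pt := (@pt n).

Lemma vec_le1 (v : 'I_n.+1 -> R) : (forall i, 0 <= v i) -> \sum_i v i = 1 -> forall i, v i <= 1.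
Proof.
move=> h0 hs i; rewrite -hs (bigD1 i) //= lerDl; apply: sumr_ge0 => j _; exact: h0.
Qed.

Lemma pt_in N l : szn l = (2 ^ N)%N -> in_simplex (pt N l).
Proof.
move=> hl.
have h0 : forall i, 0 <= pt N l i by move=> i; rewrite /pt divr_ge0 // ler0n.
have hs : \sum_i pt N l i = 1.
  rewrite /pt -mulr_suml -natr_sum.
  have -> : (\sum_(i < n.+1) l i)%N = (2 ^ N)%N by [].
  by rewrite divff // gt_eqF // two_pow_gt0.
split => // i; rewrite h0 /=; exact: vec_le1.
Qed.

Definition mkpt N l (H : szn l = (2 ^ N)%N) : simplex n := exist _ (pt N l) (pt_in H).

Definition KK := n.
Definition gm (w : simplex n) : nat -> nat :=
  fun k => Num.truncn ((2 ^ KK.+1)%:R * sval w (inord k)).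
Definition gl w := fill (gm w) (2 ^ KK).

Lemma gm_sz w : (2 ^ KK <= szn (gm w))%N.
Proof.
have hlt : forall i : 'I_n.+1, (2 ^ KK.+1)%:R * sval w i < (gm w i).+1%:R.
  by move=> i; rewrite /gm inord_val; apply: truncnS_gt.
have : ((2 ^ KK.+1)%:R : R) < (szn (gm w) + n.+1)%:R.
  have e1 : ((2 ^ KK.+1)%:R : R) = \sum_i (2 ^ KK.+1)%:R * sval w i.
    by rewrite -mulr_sumr simplex_sum mulr1.
  have e2 : ((szn (gm w) + n.+1)%:R : R) = \sum_(i < n.+1) ((gm w i).+1)%:R.
    rewrite -natr_sum; congr (_%:R).
    have -> : (\sum_(i < n.+1) (gm w i).+1 = \sum_(i < n.+1) (gm w i + 1))%N.
      by apply: eq_bigr => i _; rewrite addn1.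
    by rewrite big_split /= sum_nat_const card_ord muln1.
  rewrite e1 e2; apply: ltr_sum; last by move=> i _; apply: hlt.
  by apply/hasP; exists ord0; rewrite ?mem_index_enum.
rewrite ltr_nat expnS => h.
have : (n < 2 ^ KK)%N by apply: ltn_expl.
lia.
Qed.

Lemma gl_sz w : szn (gl w) = (2 ^ KK)%N.
Proof. by rewrite /gl sz_fill; have := gm_sz w; lia. Qed.

Definition g w : simplex n := mkpt (gl_sz w).

Lemma g_le w i : sval (g w) i <= 2 * sval w i.
Proof.
rewrite /= /pt.
have h := two_pow_gt0 KK.
rewrite ler_pdivrMr // mulrC.
apply: (@le_trans _ _ (gm w i)%:R).
  by rewrite ler_nat fill_le.
have := truncn_le ((2 ^ KK.+1)%:R * sval w (inord i)).
rewrite /gm inord_val mulr_ge0 ?ler0n ?simplex_ge0 // => h1.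
apply: le_trans h1 _; rewrite expnS natrM; lra.
Qed.

Lemma T_in w : in_simplex (fun i => 2 * sval w i - sval (g w) i).
Proof.
have h0 : forall i, 0 <= 2 * sval w i - sval (g w) i by move=> i; have := g_le w i; lra.
have hs : \sum_i (2 * sval w i - sval (g w) i) = 1.
  rewrite sumrB -mulr_sumr !simplex_sum; lra.
split => // i; rewrite h0 /=; exact: (vec_le1 h0 hs i).
Qed.

Definition T w : simplex n := exist _ _ (T_in w).

Lemma gT_mid w : simplex_mid (g w) (T w) = w.
Proof. apply: simplex_eq => i /=; lra. Qed.

End Digit.

Section Main.
Variables (n : nat) (A : Type) (mA : A -> A -> A) (f : 'I_n.+1 -> A).
Hypothesis Hmcb : m_convex_body mA.
Let Hmid : is_midpoint_set mA. Proof. by case: Hmcb. Qed.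
Let Hcan : cancellative mA. Proof. by case: Hmcb => _ []. Qed.
Let Hit : iterative mA. Proof. by case: Hmcb => _ []. Qed.
Let mxx : forall x, mA x x = x. Proof. by case: Hmid. Qed.
Let mC : forall x y, mA x y = mA y x. Proof. by case: Hmid => _ []. Qed.
Let mM : forall x y z w, mA (mA x y) (mA z w) = mA (mA x z) (mA y w).
Proof. by case: Hmid => _ []. Qed.

Local Notation evR := (evR mA f).
Local Notation szn := (sz n).

Lemma cancel_r x y z : mA x z = mA y z -> x = y.
Proof. by rewrite (mC x) (mC y); apply: Hcan. Qed.

Lemma F_lemma (e gg p q : 'I_n.+1 -> R) : isDy e -> isDy gg -> isDy p -> isDy q ->
  (forall i, 2 * e i + gg i = 2 * p i + q i) ->
  forall Y, mA (evR e) (mA (evR gg) Y) = mA (evR p) (mA (evR q) Y).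
Proof.
move=> De Dg Dp Dq H Y.
have [Dge Ege] := isDy_mid f Hmid Dg De.
have [_ E1] := isDy_mid f Hmid De Dge.
have [Dqe Eqe] := isDy_mid f Hmid Dq De.
have [_ E2] := isDy_mid f Hmid Dp Dqe.
have h0 : mA (evR e) (mA (evR gg) (evR e)) = mA (evR p) (mA (evR q) (evR e)).
  rewrite -Ege -E1 -Eqe -E2; congr evR; apply: functional_extensionality => i.
  have := H i; lra.
apply: (@cancel_r _ _ (mA (evR p) (mA (evR q) (evR e)))).
rewrite -{2}h0 [LHS]mM [RHS]mM.
rewrite [in LHS](mM (evR gg)) [in RHS](mM (evR q)).
by rewrite (mC (evR e)) (mC (evR gg)).
Qed.


Definition Mc := (KK n + 1)%N.
Definition dg (w : simplex n) := fun i => (2 ^ 1 * gl w i)%N.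
Lemma dg_sz w : szn (dg w) = (2 ^ Mc)%N.
Proof. by rewrite /dg sz_scale gl_sz -expnD addnC. Qed.
Lemma dg_pt w : pt Mc (dg w) = sval (g w).
Proof. by rewrite /= /Mc -pt_lift. Qed.
Lemma dg_pti w (i : 'I_n.+1) : (dg w i)%:R / (2 ^ Mc)%:R = sval (g w) i.
Proof. by have := congr1 (fun v => v i) (dg_pt w). Qed.

Lemma PMc_gt0 : (0 : R) < (2 ^ Mc)%:R.
Proof. exact: two_pow_gt0. Qed.

Lemma ptE N l (i : 'I_n.+1) : pt N l i = (l i)%:R / (2 ^ N)%:R.
Proof. by []. Qed.

Record KS := mkKS { ke : nat -> nat; kw : simplex n; ke' : nat -> nat; kw' : simplex n;
  kse : szn ke = (2 ^ Mc)%N; kse' : szn ke' = (2 ^ Mc)%N;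
  keq : forall i, pt Mc ke i + sval kw i = pt Mc ke' i + sval kw' i }.

Definition mu (x : KS) := fun i => minn (2 * ke x i + dg (kw x) i) (2 * ke' x i + dg (kw' x) i)%N.

Lemma T_val (w : simplex n) (i : 'I_n.+1) : sval (T w) i = 2 * sval w i - sval (g w) i.
Proof. by []. Qed.

Lemma mu_lb (x : KS) (i : 'I_n.+1) :
  (2 * ke x i + dg (kw x) i)%N%:R - (2 ^ Mc)%:R * sval (T (kw' x)) i <= (mu x i)%:R.
Proof.
set P : R := (2 ^ Mc)%:R.
have hP : 0 < P := PMc_gt0.
have hk := keq x i; rewrite !ptE in hk.
have hk2 : (ke x i)%:R + P * sval (kw x) i = (ke' x i)%:R + P * sval (kw' x) i.
  have e := congr1 (fun z => z * P) hk; rewrite /= !mulrDl !mulfVK ?gt_eqF // in e; lra.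
have hg := dg_pti (kw x) i; have hg' := dg_pti (kw' x) i.
have hg2 : (dg (kw x) i)%:R = P * sval (g (kw x)) i by rewrite -hg mulrC mulfVK ?gt_eqF.
have hg2' : (dg (kw' x) i)%:R = P * sval (g (kw' x)) i by rewrite -hg' mulrC mulfVK ?gt_eqF.
have hle := g_le (kw x) i.
have hle' : P * sval (g (kw x)) i <= P * (2 * sval (kw x) i) by rewrite ler_pM2l.
have hT := simplex_ge0 (T (kw' x)) i.
have hT2 : 0 <= P * sval (T (kw' x)) i by rewrite mulr_ge0 // ltW.
rewrite T_val in hT2 |- *.
have eX : (2 * ke x i + dg (kw x) i)%N%:R = 2 * (ke x i)%:R + P * sval (g (kw x)) i.
  by rewrite natrD natrM hg2.
have eX' : (2 * ke' x i + dg (kw' x) i)%N%:R = 2 * (ke' x i)%:R + P * sval (g (kw' x)) i.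
  by rewrite natrD natrM hg2'.
rewrite /mu /minn; case: ifP => _; rewrite eX ?eX'.
  lra.
rewrite mulrBr in hT2 |- *.
lra.
Qed.


Lemma mu_sz x : (2 ^ Mc.+1 <= szn (mu x))%N.
Proof.
have hs : (\sum_(i < n.+1) (2 * ke x i + dg (kw x) i))%N = (3 * 2 ^ Mc)%N.
  have := kse x; have := dg_sz (kw x); rewrite /sz => h1 h2.
  by rewrite big_split /= -big_distrr /= h1 h2; lia.
have H : \sum_(i < n.+1) ((2 * ke x i + dg (kw x) i)%N%:R - (2 ^ Mc)%:R * sval (T (kw' x)) i)
   <= \sum_(i < n.+1) (mu x i)%:R.
  by apply: ler_sum => i _; exact: mu_lb.
rewrite sumrB -natr_sum -mulr_sumr simplex_sum -natr_sum hs in H.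
rewrite -(ler_nat R) expnS.
move: H; rewrite !natrM /sz; lra.
Qed.

Definition pc x := fill (mu x) (2 ^ Mc.+1).
Definition qc x := fun i => (2 * ke x i + dg (kw x) i - pc x i)%N.
Definition qc' x := fun i => (2 * ke' x i + dg (kw' x) i - pc x i)%N.

Lemma pc_sz x : szn (pc x) = (2 ^ Mc.+1)%N.
Proof. by rewrite /pc sz_fill; have := mu_sz x; lia. Qed.

Lemma pc_le x i : (pc x i <= 2 * ke x i + dg (kw x) i)%N /\ (pc x i <= 2 * ke' x i + dg (kw' x) i)%N.
Proof. have := fill_le (mu x) (2 ^ Mc.+1) i; rewrite /pc /mu; lia. Qed.

Lemma qc_sz_gen (a b : nat -> nat) x : szn a = (2 ^ Mc)%N -> szn b = (2 ^ Mc)%N ->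
  (forall i, pc x i <= 2 * a i + b i)%N ->
  szn (fun i => 2 * a i + b i - pc x i)%N = (2 ^ Mc)%N.
Proof.
move=> ha hb hle.
have : (szn (fun i => 2 * a i + b i - pc x i)%N + szn (pc x))%N = (2 * szn a + szn b)%N.
  rewrite -sz_add /sz big_distrr -big_split /=; apply: eq_bigr => i _.
  by rewrite /addv; have := hle i; lia.
rewrite pc_sz ha hb expnS; lia.
Qed.

Lemma qc_sz x : szn (qc x) = (2 ^ Mc)%N.
Proof. by apply: qc_sz_gen; [exact: kse | exact: dg_sz | move=> i; case: (pc_le x i)]. Qed.
Lemma qc'_sz x : szn (qc' x) = (2 ^ Mc)%N.
Proof. by apply: qc_sz_gen; [exact: kse' | exact: dg_sz | move=> i; case: (pc_le x i)]. Qed.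

Lemma q_val_gen (a : nat -> nat) (w : simplex n) x (i : 'I_n.+1) :
  (pc x i <= 2 * a i + dg w i)%N ->
  pt Mc (fun i => 2 * a i + dg w i - pc x i)%N i =
  2 * pt Mc a i + sval (g w) i - 2 * pt Mc.+1 (pc x) i.
Proof.
move=> hle; rewrite !ptE -(dg_pti w i) natrB // natrD natrM expnS natrM.
have h := PMc_gt0; field; rewrite gt_eqF //.
Qed.

Lemma kt_keq x i : pt Mc (qc x) i + sval (T (kw x)) i = pt Mc (qc' x) i + sval (T (kw' x)) i.
Proof.
rewrite /qc /qc' !q_val_gen; try by case: (pc_le x i).
rewrite !T_val; have := keq x i; lra.
Qed.

Definition kt (x : KS) : KS := @mkKS (qc x) (T (kw x)) (qc' x) (T (kw' x)) (qc_sz x) (qc'_sz x) (kt_keq x).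


Lemma isDy_pt N l : szn l = (2 ^ N)%N -> isDy (@pt n N l).
Proof. by move=> hl; exists N, l. Qed.

Lemma isDy_g (w : simplex n) : isDy (sval (g w)).
Proof. exact: (isDy_pt (gl_sz w)). Qed.

Section WithH.
Variable h : simplex n -> A.
Hypothesis hrec : forall w, h w = mA (evR (sval (g w))) (h (T w)).

Lemma K_claim (x : KS) :
  mA (evR (pt Mc (ke x))) (h (kw x)) = mA (evR (pt Mc (ke' x))) (h (kw' x)).
Proof.
have [u [_ uu]] := Hit (fun x => evR (pt Mc.+1 (pc x))) kt.
have e1 := uu (fun x => mA (evR (pt Mc (ke x))) (h (kw x))).
have e2 := uu (fun x => mA (evR (pt Mc (ke' x))) (h (kw' x))).
suff E : (fun x => mA (evR (pt Mc (ke x))) (h (kw x))) =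
         (fun x => mA (evR (pt Mc (ke' x))) (h (kw' x))).
  by have := congr1 (fun F => F x) E.
rewrite -e1 ?e2 //.
- move=> y /=; rewrite {1}(hrec (kw' y)); apply: F_lemma.
  + exact: isDy_pt (kse' y).
  + exact: isDy_g.
  + exact: isDy_pt (pc_sz y).
  + exact: isDy_pt (qc'_sz y).
  + move=> i; rewrite /qc' q_val_gen; first by lra.
    by case: (pc_le y i).
- move=> y /=; rewrite {1}(hrec (kw y)); apply: F_lemma.
  + exact: isDy_pt (kse y).
  + exact: isDy_g.
  + exact: isDy_pt (pc_sz y).
  + exact: isDy_pt (qc_sz y).
  + move=> i; rewrite /qc q_val_gen; first by lra.
    by case: (pc_le y i).
Qed.

Lemma L_lemma (ld : nat -> nat) (hd : szn ld = (2 ^ Mc)%N) (w : simplex n) :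
  h (simplex_mid (mkpt hd) w) = mA (evR (pt Mc ld)) (h w).
Proof.
set z := simplex_mid (mkpt hd) w.
have hk : forall i, pt Mc (dg z) i + sval (T z) i = pt Mc ld i + sval w i.
  by move=> i; rewrite dg_pt T_val /=; lra.
have := K_claim (@mkKS (dg z) (T z) ld w (dg_sz z) hd hk).
by rewrite /= dg_pt -hrec.
Qed.

Lemma h_hom : midpoint_hom (@simplex_mid n) mA h.
Proof.
move=> w1 w2.
have [u [_ uu]] := Hit (fun p : simplex n * simplex n => mA (evR (sval (g p.1))) (evR (sval (g p.2))))
  (fun p => (T p.1, T p.2)).
have e1 := uu (fun p => h (simplex_mid p.1 p.2)).
have e2 := uu (fun p => mA (h p.1) (h p.2)).
suff E : (fun p : simplex n * simplex n => h (simplex_mid p.1 p.2)) = (fun p => mA (h p.1) (h p.2)).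
  by have := congr1 (fun F => F (w1, w2)) E.
rewrite -e1 ?e2 //.
- by move=> [a b] /=; rewrite [h a]hrec [h b]hrec mM.
- move=> [a b] /=.
  have hd : szn (addv (gl a) (gl b)) = (2 ^ Mc)%N.
    by rewrite sz_add !gl_sz /Mc addn1 expnS; lia.
  have hv : forall i, pt Mc (addv (gl a) (gl b)) i = (sval (g a) i + sval (g b) i) / 2.
    move=> i; rewrite /Mc addn1 -pt_mid /=; by [].
  have -> : simplex_mid a b = simplex_mid (mkpt hd) (simplex_mid (T a) (T b)).
    apply: simplex_eq => i; rewrite !sm_val !T_val.
    change (sval (mkpt hd) i) with (pt Mc (addv (gl a) (gl b)) i); rewrite hv; lra.
  rewrite L_lemma; congr (mA _ _).
  have [_ E] := isDy_mid f Hmid (isDy_g a) (isDy_g b).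
  rewrite -E; congr evR; apply: functional_extensionality => i; exact: hv.
Qed.

Lemma h_vertex i : h (vertex i) = f i.
Proof.
pose ld := (fun k => 2 ^ Mc * ei i k)%N.
have hd : szn ld = (2 ^ Mc)%N by rewrite /ld sz_scale sz_ei muln1.
have hv : mkpt hd = vertex i.
  apply: simplex_eq => j /=; rewrite /ld -(pt_lift n 0 Mc (ei i)) /pt /delta /ei expn0 divr1.
  by case: eqP => [/val_inj ->|hne]; rewrite ?eqxx //; case: eqP => // e; case: hne; rewrite e.
have := L_lemma hd (vertex i).
have -> : simplex_mid (mkpt hd) (vertex i) = vertex i.
  by rewrite hv; case: (simplex_midpoint n) => ->.
have -> : evR (pt Mc ld) = f i.
  rewrite (evR_pt f Hmid hd) /ld.
  have e := @ev_double _ _ mA f Hmid 0 Mc (ei i) (sz_ei i).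
  rewrite add0n in e; rewrite e.
  rewrite -(ev0_ei mA f (c := fun _ => 0%N) i); last by rewrite /sz big1.
  by apply: ev_ext => k _; rewrite /addv.
move=> e; apply: (@cancel_r _ _ (h (vertex i))).
by rewrite mxx {1}e.
Qed.

End WithH.

Lemma mkpt_val N l (hl : szn l = (2 ^ N)%N) i : sval (mkpt hl) i = pt N l i.
Proof. by []. Qed.

Lemma phi_dy (phi : simplex n -> A) (hphi : midpoint_hom (@simplex_mid n) mA phi)
  (hv : forall i, phi (vertex i) = f i) :
  forall N l (hl : szn l = (2 ^ N)%N), phi (mkpt hl) = ev mA f N l.
Proof.
elim=> [|N IH] l hl.
  have h1 : szn l = 1%N by rewrite hl expn0.
  case: (pickP (fun i : 'I_n.+1 => (0 < l i)%N)) => [x hx | hno]; last first.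
    exfalso; move: h1; rewrite /sz big1 // => i _; have := hno i; rewrite /=; lia.
  have hl' : forall j, (j < n.+1)%N -> l j = ei x j.
    have hs := sz_sub1 hx; rewrite h1 in hs.
    have hz : szn (fun i => l i - ei x i)%N = 0%N by lia.
    move=> j hj; have := le_sz (fun i => l i - ei x i)%N hj; rewrite hz.
    have hx1 := le_sz l (ltn_ord x); rewrite h1 in hx1.
    rewrite /ei; move: hx hx1; case: eqP => [->|] /=; lia.
  have -> : mkpt hl = vertex x.
    apply: simplex_eq => j; rewrite mkpt_val ptE hl' // /ei /= /delta expn0 divr1.
    by case: eqP => [/val_inj ->|hne]; rewrite ?eqxx //; case: eqP => // e; case: hne; rewrite e.
  rewrite hv -(ev0_ei mA f (c := fun _ => 0%N) x); last by rewrite /sz big1.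
  by apply: ev_ext => j hj; rewrite /addv hl'.
set F := fill l (2 ^ N); set G := (fun i => l i - F i)%N.
have hF : szn F = (2 ^ N)%N by rewrite sz_fill hl expnS; lia.
have hG : szn G = (2 ^ N)%N.
  have : (szn G + szn F)%N = szn l.
    rewrite -sz_add; apply: sz_ext => i hi; have := fill_le l (2 ^ N) i.
    rewrite /addv /G /F; lia.
  rewrite hF hl expnS; lia.
have -> : mkpt hl = simplex_mid (mkpt hF) (mkpt hG).
  apply: simplex_eq => i; rewrite sm_val !mkpt_val !ptE.
  have hle := fill_le l (2 ^ N) i.
  rewrite /G natrB // expnS natrM -/F.
  have h := two_pow_gt0 N; field; rewrite gt_eqF //.
by rewrite hphi !IH.
Qed.

End Main.

Theorem mainTheorem14 (n : nat) :
  m_convex_body (@simplex_mid n) /\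
  (forall (A : Type) (mA : A -> A -> A), m_convex_body mA ->
   forall f : 'I_n.+1 -> A,
   exists! h : simplex n -> A,
     midpoint_hom (@simplex_mid n) mA h /\ (forall i, h (vertex i) = f i)).
Proof.
split; first exact: simplex_mcb.
move=> A mA Hm f.
have Hit : iterative mA by case: Hm => _ [].
have Hmid : is_midpoint_set mA by case: Hm.
have [h [hrec huniq]] := Hit (simplex n) (fun w => evR mA f (sval (g w))) (@T n).
exists h; split.
  split; [exact: (h_hom Hm hrec) | exact: (h_vertex Hm hrec)].
move=> phi [hphi hv]; apply: huniq => w.
rewrite -{1}(gT_mid w) hphi; congr (mA _ _).
rewrite /g (phi_dy hphi hv) evR_pt //.
exact: gl_sz.
Qed.
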